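(* Let $R=[0,1]^2$, $s\in\mathbb{N}$, $u=2^{-s}$, and let $(B_1,B_2)$ be a good box pair. Let $\ell=\{a\lambda+b\}$ and $\ell'=\{a'\lambda+b'\}$ be two lines in $\mathcal{L}$ traversing $(B_1,B_2)$, with $a,a'$ unit direction vectors and $b,b'$ the intersection points of $\ell,\ell'$ with the line $y=-x$. Then $\|b-b'\|_\infty\le4\sqrt u$. In particular, $B=O(\sqrt u)$, where $B$ is the supremum of $\|b_c-b\|_\infty$ over all lines in $\mathcal{L}$ traversing $(B_1,B_2)$, $b$ their intersection with $y=-x$, and $b_c$ the intersection of the line through $c_1,c_2$ with $y=-x$.
   Context: For $p,q\in\mathbb{R}^2$ write $p\le q$ if both coordinates satisfy $\le$. $R$ is split into $2^s\times2^s$ congruent closed squares (''boxes'') of side length $u$. A box pair is an ordered pair $(B_1,B_2)$ of boxes with centers $c_1,c_2$. Let $\mathcal{L}$ be the set of non-vertical lines in $\mathbb{R}^2$ with positive slope; each has a unit direction vector $a=(a_1,a_2)$ with positive coordinates, and $\hat{\ell}:=\min\{a_1,a_2\}$. A line $\ell\in\mathcal{L}$ traverses $(B_1,B_2)$ if it meets both boxes. A box pair is null if $c_1\not\le c_2$; close if $c_1\le c_2$ and $\|c_1-c_2\|_2<\sqrt u$; non-diagonal if $c_1\le c_2$, $\|c_1-c_2\|_2\ge\sqrt u$, and every traversing $\ell\in\mathcal{L}$ satisfies $\hat{\ell}<u^{1/5}$; good if it is neither null, close, nor non-diagonal. $O(\sqrt u)$ means bounded by an absolute constant times $\sqrt u$,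 uniformly over $s$ and good box pairs. *)

(* Defs.v *)
From Stdlib Require Import Reals Lra.
Open Scope R_scope.

Definition u_of (s : nat) : R := / (2 ^ s).

Definition box_index (s i : nat) : Prop := (i < 2 ^ s)%nat.
Definition in_box (s i j : nat) (p : R * R) : Prop :=
  INR i * u_of s <= fst p <= INR (i + 1) * u_of s /\
  INR j * u_of s <= snd p <= INR (j + 1) * u_of s.
Definition center (s i j : nat) : R * R :=
  ((INR i + / 2) * u_of s, (INR j + / 2) * u_of s).

Definition ple (p q : R * R) : Prop := fst p <= fst q /\ snd p <= snd q.
Definition dist2 (p q : R * R) : R :=
  sqrt ((fst p - fst q) ^ 2 + (snd p - snd q) ^ 2).
Definition distinf (p q : R * R) : R :=
  Rmax (Rabs (fst p - fst q)) (Rabs (snd p - snd q)).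

Definition unit_pos_dir (a : R * R) : Prop :=
  0 < fst a /\ 0 < snd a /\ fst a ^ 2 + snd a ^ 2 = 1.
Definition on_line (a b p : R * R) : Prop :=
  exists lam : R, p = (fst a * lam + fst b, snd a * lam + snd b).
Definition lhat (a : R * R) : R := Rmin (fst a) (snd a).

Definition traverses (s i1 j1 i2 j2 : nat) (a b : R * R) : Prop :=
  (exists p, on_line a b p /\ in_box s i1 j1 p) /\
  (exists p, on_line a b p /\ in_box s i2 j2 p).

Definition null_pair (s i1 j1 i2 j2 : nat) : Prop :=
  ~ ple (center s i1 j1) (center s i2 j2).
Definition close_pair (s i1 j1 i2 j2 : nat) : Prop :=
  ple (center s i1 j1) (center s i2 j2) /\
  dist2 (center s i1 j1) (center s i2 j2) < sqrt (u_of s).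
Definition nondiagonal_pair (s i1 j1 i2 j2 : nat) : Prop :=
  ple (center s i1 j1) (center s i2 j2) /\
  dist2 (center s i1 j1) (center s i2 j2) >= sqrt (u_of s) /\
  (forall a b : R * R, unit_pos_dir a -> traverses s i1 j1 i2 j2 a b ->
     lhat a < Rpower (u_of s) (1 / 5)).
Definition good_pair (s i1 j1 i2 j2 : nat) : Prop :=
  ~ null_pair s i1 j1 i2 j2 /\ ~ close_pair s i1 j1 i2 j2 /\
  ~ nondiagonal_pair s i1 j1 i2 j2.

Definition on_line_through (c1 c2 p : R * R) : Prop :=
  exists t : R, p = (fst c1 + t * (fst c2 - fst c1), snd c1 + t * (snd c2 - snd c1)).

(* Main.v *)
Require Import Defs.
From Stdlib Require Import Reals Lra Psatz Classical Lia.
Open Scope R_scope.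

Definition F (px py qx qy : R) := (px*qy - py*qx)/((qx+qy)-(px+py)).

Lemma mob (x x' al be ga de : R): x <= x' -> 0 < ga*x+de -> 0 < ga*x'+de ->
  0 <= al*de - be*ga -> (al*x+be)/(ga*x+de) <= (al*x'+be)/(ga*x'+de).
Proof.
  intros. assert (E: (al*x'+be)/(ga*x'+de) - (al*x+be)/(ga*x+de) =
    (al*de-be*ga)*(x'-x)/((ga*x+de)*(ga*x'+de))) by (field; lra).
  assert (0 <= (al*de-be*ga)*(x'-x)/((ga*x+de)*(ga*x'+de))).
  { unfold Rdiv; apply Rmult_le_pos; [apply Rmult_le_pos; lra|].
    left; apply Rinv_0_lt_compat; apply Rmult_lt_0_compat; lra. }
  lra.
Qed.

Lemma F_px px px' py qx qy : px <= px' -> 0 < qx+qy-(px+py) -> 0 < qx+qy-(px'+py) ->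
  py <= qy -> 0 <= qx+qy -> F px py qx qy <= F px' py qx qy.
Proof.
  intros. unfold F.
  replace (px*qy - py*qx) with (qy*px + -(py*qx)) by ring.
  replace (px'*qy - py*qx) with (qy*px' + -(py*qx)) by ring.
  replace (qx+qy-(px+py)) with ((-1)*px + (qx+qy-py)) by ring.
  replace (qx+qy-(px'+py)) with ((-1)*px' + (qx+qy-py)) by ring.
  apply mob; try lra.
  replace (qy * (qx + qy - py) - - (py * qx) * -1) with ((qx+qy)*(qy-py)) by ring.
  apply Rmult_le_pos; lra.
Qed.

Lemma F_py px py py' qx qy : py' <= py -> 0 < qx+qy-(px+py) -> 0 < qx+qy-(px+py') ->
  px <= qx -> 0 <= qx+qy -> F px py qx qy <= F px py' qx qy.
Proof.
  intros. unfold F.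
  replace (px*qy - py*qx) with (qx*(-py) + px*qy) by ring.
  replace (px*qy - py'*qx) with (qx*(-py') + px*qy) by ring.
  replace (qx+qy-(px+py)) with (1*(-py) + (qx+qy-px)) by ring.
  replace (qx+qy-(px+py')) with (1*(-py') + (qx+qy-px)) by ring.
  apply mob; try lra.
  replace (qx * (qx + qy - px) - px * qy * 1) with ((qx+qy)*(qx-px)) by ring.
  apply Rmult_le_pos; lra.
Qed.

Lemma F_qx px py qx qx' qy : qx' <= qx -> 0 < qx+qy-(px+py) -> 0 < qx'+qy-(px+py) ->
  py <= qy -> 0 <= px+py -> F px py qx qy <= F px py qx' qy.
Proof.
  intros. unfold F.
  replace (px*qy - py*qx) with (py*(-qx) + px*qy) by ring.
  replace (px*qy - py*qx') with (py*(-qx') + px*qy) by ring.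
  replace (qx+qy-(px+py)) with ((-1)*(-qx) + (qy-px-py)) by ring.
  replace (qx'+qy-(px+py)) with ((-1)*(-qx') + (qy-px-py)) by ring.
  apply mob; try lra.
  replace (py * (qy - px - py) - px * qy * -1) with ((px+py)*(qy-py)) by ring.
  apply Rmult_le_pos; lra.
Qed.

Lemma F_qy px py qx qy qy' : qy <= qy' -> 0 < qx+qy-(px+py) -> 0 < qx+qy'-(px+py) ->
  px <= qx -> 0 <= px+py -> F px py qx qy <= F px py qx qy'.
Proof.
  intros. unfold F.
  replace (px*qy - py*qx) with (px*qy + -(py*qx)) by ring.
  replace (px*qy' - py*qx) with (px*qy' + -(py*qx)) by ring.
  replace (qx+qy-(px+py)) with (1*qy + (qx-px-py)) by ring.
  replace (qx+qy'-(px+py)) with (1*qy' + (qx-px-py)) by ring.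
  apply mob; try lra.
  replace (px * (qx - px - py) - - (py * qx) * 1) with ((px+py)*(qx-px)) by ring.
  apply Rmult_le_pos; lra.
Qed.

Section Bnd.
Variables (u x1 y1 x2 y2 : R).
Hypotheses (Hu : 0 < u) (Hx1 : 0 <= x1) (Hy1 : 0 <= y1)
  (Hdx : u <= x2 - x1) (Hdy : u <= y2 - y1) (HE : 2*u < (x2-x1)+(y2-y1)).

Definition inr (px py qx qy : R) :=
  x1 <= px <= x1 + u /\ y1 <= py <= y1 + u /\ x2 <= qx <= x2 + u /\ y2 <= qy <= y2 + u.

Lemma F_hi px py qx qy : inr px py qx qy -> F px py qx qy <= F (x1+u) y1 x2 (y2+u).
Proof.
  unfold inr; intros (Ha&Hb&Hc&Hd).
  apply Rle_trans with (F (x1+u) py qx qy). apply F_px; lra.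
  apply Rle_trans with (F (x1+u) y1 qx qy). apply F_py; lra.
  apply Rle_trans with (F (x1+u) y1 x2 qy). apply F_qx; lra.
  apply F_qy; lra.
Qed.

Lemma F_lo px py qx qy : inr px py qx qy -> F x1 (y1+u) (x2+u) y2 <= F px py qx qy.
Proof.
  unfold inr; intros (Ha&Hb&Hc&Hd).
  apply Rle_trans with (F x1 py qx qy). 2: apply F_px; lra.
  apply Rle_trans with (F x1 (y1+u) qx qy). 2: apply F_py; lra.
  apply Rle_trans with (F x1 (y1+u) (x2+u) qy). 2: apply F_qx; lra.
  apply F_qy; lra.
Qed.

Lemma F_diff : F (x1+u) y1 x2 (y2+u) - F x1 (y1+u) (x2+u) y2 =
  u*(x1+y1+x2+y2+2*u)/((x2-x1)+(y2-y1)).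
Proof. unfold F. field. lra. Qed.

Lemma F_final r : r*r = u -> 0 <= r -> x2 + u <= 1 -> y2 + u <= 1 ->
  u <= (x2-x1)^2 + (y2-y1)^2 ->
  u*(x1+y1+x2+y2+2*u)/((x2-x1)+(y2-y1)) <= 4*r.
Proof.
  intros. set (E := (x2-x1)+(y2-y1)).
  assert (r <= E) by (unfold E in *; nra).
  apply Rle_trans with (4*u/E).
  { unfold Rdiv. apply Rmult_le_compat_r. left; apply Rinv_0_lt_compat; unfold E; lra.
    unfold E in *; nra. }
  assert (0 < r) by nra.
  apply (Rmult_le_reg_r E). unfold E; lra.
  unfold Rdiv; rewrite Rmult_assoc, Rinv_l by (unfold E; lra). nra.
Qed.

End Bnd.

Lemma F_line a1 a2 b1 b2 l m : b1 + b2 = 0 -> (a1*m+b1)+(a2*m+b2) - ((a1*l+b1)+(a2*l+b2)) <> 0 ->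
  F (a1*l+b1) (a2*l+b2) (a1*m+b1) (a2*m+b2) = b1.
Proof.
  intros. unfold F. replace b2 with (-b1) in * by lra.
  replace ((a1 * l + b1) * (a2 * m + - b1) - (a2 * l + - b1) * (a1 * m + b1)) with
   (b1 * ((a1 * m + b1 + (a2 * m + - b1) - (a1 * l + b1 + (a2 * l + - b1))))) by ring.
  field. auto.
Qed.

Lemma v_pos u y : 0 < u -> 0 < Rpower u y.
Proof. intros; unfold Rpower; apply exp_pos. Qed.

Lemma v_pow5 u : 0 < u -> Rpower u (1/5) ^ 5 = u.
Proof.
  intros. rewrite <- Rpower_pow by (apply v_pos; auto).
  rewrite Rpower_mult. replace (1/5 * INR 5) with 1 by (simpl; field).
  apply Rpower_1; auto.
Qed.

Lemma v_big u v : v^5 = u -> 1/4 <= u -> 0 < v -> 3/4 < v.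
Proof.
  intros. destruct (Rle_or_lt v (3/4)); auto.
  assert (v^5 <= (3/4)^5) by (apply pow_incr; lra). lra.
Qed.

Lemma v_small u v : v^5 = u -> u <= 1/8 -> 0 < v -> v < 66/100.
Proof.
  intros. destruct (Rlt_or_le v (66/100)); auto.
  assert ((66/100)^5 <= v^5) by (apply pow_incr; lra). lra.
Qed.

Lemma col_excl u v a1 a2 l m x0 y0 x1 y1 D : 0 < u -> u <= 1/8 -> v^5 = u -> 0 < v ->
  v <= a1 -> 0 < a2 -> a2 <= 1 -> x1 - x0 = a1*(m-l) -> y1 - y0 = a2*(m-l) ->
  Rabs (x1 - x0) <= u -> (D-1)*u <= y1 - y0 -> 1 <= D^2 * u -> 0 <= D -> False.
Proof.
  intros. assert (Hv := v_small u v H1 H0 H2).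
  assert (D2: 2 < D). { destruct (Rle_or_lt D 2); auto. nra. }
  assert (Hml: 0 < m - l) by nra.
  assert (h1: (D-1)*u <= m - l) by nra.
  assert (h2: a1*(m-l) <= u) by (rewrite <- H6; apply Rle_trans with (2:=H8); apply RRle_abs).
  assert (h3: v*(D-1)*u <= u) by nra.
  assert (h4: v*(D-1) <= 1) by nra.
  assert (h5: D*v <= 1 + v) by nra.
  assert (h6: (D*v)^2 <= (1+v)^2) by (apply pow_incr; nra).
  assert (h7: D^2*v^5 <= (1+v)^2*v^3) by (replace (D^2*v^5) with ((D*v)^2*v^3) by ring; apply Rmult_le_compat_r; [apply pow_le; lra | auto]).
  assert (h8: (1+v)^2*v^3 < 1).
  { assert (v^3 <= (66/100)^3) by (apply pow_incr; lra).
    assert ((1+v)^2 <= (166/100)^2) by (apply pow_incr; lra).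
    assert (0 <= v^3) by (apply pow_le; lra).
    nra. }
  rewrite H1 in h7. lra.
Qed.

Lemma bidx s i : box_index s i -> INR i * u_of s + u_of s <= 1.
Proof.
  unfold box_index, u_of; intros H.
  assert (H1: INR (S i) <= INR (2^s)) by (apply le_INR; lia).
  rewrite S_INR, pow_INR in H1. simpl INR in H1.
  assert (0 < 2^s) by (apply pow_lt; lra).
  replace (INR i * / 2 ^ s + / 2 ^ s) with ((INR i + 1) * / 2^s) by ring.
  apply (Rmult_le_reg_r (2^s)); auto. rewrite Rmult_assoc, Rinv_l by lra. replace ((1+1):R) with 2 in H1 by ring. lra.
Qed.

Lemma u_pos s : 0 < u_of s.
Proof. unfold u_of. apply Rinv_0_lt_compat, pow_lt; lra. Qed.

Lemma u_cases s : 1/4 <= u_of s \/ u_of s <= 1/8.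
Proof.
  unfold u_of. destruct (Compare_dec.le_lt_dec s 2).
  - left. assert (2^s <= 2^2) by (apply Rle_pow; lra || lia).
    assert (0 < 2^s) by (apply pow_lt; lra).
    replace (1/4) with (/ 2^2) by (simpl; field). apply Rinv_le_contravar; auto.
  - right. assert (2^3 <= 2^s) by (apply Rle_pow; lra || lia).
    replace (1/8) with (/ 2^3) by (simpl; field). apply Rinv_le_contravar; simpl in *; lra.
Qed.

Lemma setup s i1 j1 i2 j2 : box_index s i1 -> box_index s j1 -> box_index s i2 -> box_index s j2 ->
  good_pair s i1 j1 i2 j2 ->
  0 < u_of s /\ u_of s <= 1/8 /\ INR i1 + 1 <= INR i2 /\ INR j1 + 1 <= INR j2 /\
  INR i2 * u_of s + u_of s <= 1 /\ INR j2 * u_of s + u_of s <= 1 /\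
  u_of s <= ((INR i2 - INR i1) * u_of s)^2 + ((INR j2 - INR j1) * u_of s)^2 /\
  0 <= INR i1 /\ 0 <= INR j1.
Proof.
  intros B1 B2 B3 B4 [Gn [Gc Gd]].
  assert (Hu := u_pos s). set (u := u_of s) in *.
  assert (Hp : ple (center s i1 j1) (center s i2 j2)) by (apply NNPP; exact Gn).
  assert (Hd : sqrt u <= dist2 (center s i1 j1) (center s i2 j2)).
  { destruct (Rlt_or_le (dist2 (center s i1 j1) (center s i2 j2)) (sqrt u)); auto.
    exfalso; apply Gc; split; auto. }
  assert (Hgood : exists a b, unit_pos_dir a /\ traverses s i1 j1 i2 j2 a b /\ Rpower u (1/5) <= lhat a).
  { apply NNPP; intro N; apply Gd; split; [auto|split; [apply Rle_ge; exact Hd|]].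
    intros a b Ha Ht. destruct (Rlt_or_le (lhat a) (Rpower u (1/5))); auto.
    exfalso; apply N; eauto. }
  unfold ple, center in Hp; simpl in Hp. destruct Hp as [Hpi Hpj].
  assert (Hi : INR i1 + /2 <= INR i2 + /2) by (apply Rmult_le_reg_r with (u_of s); [exact Hu|exact Hpi]).
  assert (Hj : INR j1 + /2 <= INR j2 + /2) by (apply Rmult_le_reg_r with (u_of s); [exact Hu|exact Hpj]).
  assert (Hi' : INR i1 <= INR i2) by lra. assert (Hj' : INR j1 <= INR j2) by lra. clear Hi Hj. rename Hi' into Hi. rename Hj' into Hj.
  unfold u in *. clear u.
  apply INR_le in Hi. apply INR_le in Hj.
  unfold dist2, center in Hd; cbn [fst snd] in Hd. set (u := u_of s) in *.
  apply sqrt_le_0 in Hd; [| lra | nra].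
  replace (((INR i1 + / 2) * u - (INR i2 + / 2) * u) ^ 2) with (((INR i2 - INR i1) * u)^2) in Hd by ring.
  replace (((INR j1 + / 2) * u - (INR j2 + / 2) * u) ^ 2) with (((INR j2 - INR j1) * u)^2) in Hd by ring.
  destruct Hgood as (a & b & [Ha1 [Ha2 Ha3]] & [[p0 [[l Hl] Hp0]] [q0 [[m Hm] Hq0]]] & Hlh).
  set (v := Rpower u (1/5)) in *.
  assert (Hv5 : v^5 = u) by (apply v_pow5; auto).
  assert (Hv : 0 < v) by (apply v_pos; auto).
  assert (Hva1 : v <= fst a) by (apply Rle_trans with (1 := Hlh); apply Rmin_l).
  assert (Hva2 : v <= snd a) by (apply Rle_trans with (1 := Hlh); apply Rmin_r).
  assert (Hu8 : u <= 1/8).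
  { destruct (u_cases s) as [h|h]; auto. exfalso.
    assert (3/4 < v) by (apply (v_big u v); auto). nra. }
  unfold in_box in Hp0, Hq0. rewrite !plus_INR in Hp0, Hq0. simpl INR in Hp0, Hq0.
  subst p0 q0; cbn [fst snd] in Hp0, Hq0. change (u_of s) with u in Hp0, Hq0.
  assert (HI: INR i1 + 1 <= INR i2).
  { destruct (Nat.eq_dec i1 i2) as [e|ne].
    - subst i2. exfalso.
      apply (col_excl u v (fst a) (snd a) l m (fst a * l + fst b) (snd a * l + snd b)
        (fst a * m + fst b) (snd a * m + snd b) (INR j2 - INR j1)); auto; try nra.
      apply Rabs_le; nra.
    - assert (S i1 <= i2)%nat by lia. apply le_INR in H. rewrite S_INR in H. lra. }
  assert (HJ: INR j1 + 1 <= INR j2).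
  { destruct (Nat.eq_dec j1 j2) as [e|ne].
    - subst j2. exfalso.
      apply (col_excl u v (snd a) (fst a) l m (snd a * l + snd b) (fst a * l + fst b)
        (snd a * m + snd b) (fst a * m + fst b) (INR i2 - INR i1)); auto; try nra.
      apply Rabs_le; nra.
    - assert (S j1 <= j2)%nat by lia. apply le_INR in H. rewrite S_INR in H. lra. }
  repeat split; auto using bidx, pos_INR. all: apply bidx; auto.
Qed.

Lemma trav_F s i1 j1 i2 j2 a b :
  let u := u_of s in let x1 := INR i1 * u in let y1 := INR j1 * u in
  let x2 := INR i2 * u in let y2 := INR j2 * u in
  2*u < (x2-x1)+(y2-y1) ->
  fst b + snd b = 0 -> traverses s i1 j1 i2 j2 a b ->
  exists px py qx qy, inr u x1 y1 x2 y2 px py qx qy /\ fst b = F px py qx qy.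
Proof.
  intros u x1 y1 x2 y2 HE Hb [[p0 [[l Hl] Hp0]] [q0 [[m Hm] Hq0]]].
  unfold in_box in Hp0, Hq0. rewrite !plus_INR in Hp0, Hq0. simpl INR in Hp0, Hq0.
  subst p0 q0; cbn [fst snd] in Hp0, Hq0. change (u_of s) with u in Hp0, Hq0.
  exists (fst a * l + fst b), (snd a * l + snd b), (fst a * m + fst b), (snd a * m + snd b).
  split.
  - unfold inr, x1, y1, x2, y2. lra.
  - symmetry. apply F_line; auto. unfold x1, y1, x2, y2 in HE. lra.
Qed.

Lemma final_ineq u r lo hi A B : r * r = u -> 0 <= r -> hi - lo <= 4 * r ->
  lo <= A <= hi -> lo <= B <= hi ->
  Rmax (Rabs (A - B)) (Rabs (- A - - B)) <= 4 * r.
Proof.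
  intros. apply Rmax_lub; apply Rabs_le; lra.
Qed.

Theorem lemma7 :
  (forall (s i1 j1 i2 j2 : nat),
     box_index s i1 -> box_index s j1 -> box_index s i2 -> box_index s j2 ->
     good_pair s i1 j1 i2 j2 ->
     forall a b a' b' : R * R,
       unit_pos_dir a -> fst b + snd b = 0 -> traverses s i1 j1 i2 j2 a b ->
       unit_pos_dir a' -> fst b' + snd b' = 0 -> traverses s i1 j1 i2 j2 a' b' ->
       distinf b b' <= 4 * sqrt (u_of s))
  /\
  (exists C : R, 0 <= C /\
     forall (s i1 j1 i2 j2 : nat),
       box_index s i1 -> box_index s j1 -> box_index s i2 -> box_index s j2 ->
       good_pair s i1 j1 i2 j2 ->
       forall a b bc : R * R,
         unit_pos_dir a -> fst b + snd b = 0 -> traverses s i1 j1 i2 j2 a b ->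
         on_line_through (center s i1 j1) (center s i2 j2) bc ->
         fst bc + snd bc = 0 ->
         distinf bc b <= C * sqrt (u_of s)).
Proof.
  split; [| exists 4; split; [lra|]];
  intros s i1 j1 i2 j2 B1 B2 B3 B4 G;
  destruct (setup s i1 j1 i2 j2 B1 B2 B3 B4 G) as (Hu & Hu8 & HI & HJ & Hx2 & Hy2 & Hd & Hi1 & Hj1);
  set (u := u_of s) in *;
  set (x1 := INR i1 * u); set (y1 := INR j1 * u); set (x2 := INR i2 * u); set (y2 := INR j2 * u);
  assert (Hx1 : 0 <= x1) by (unfold x1; nra);
  assert (Hy1 : 0 <= y1) by (unfold y1; nra);
  assert (Hdx : u <= x2 - x1) by (unfold x1, x2; nra);
  assert (Hdy : u <= y2 - y1) by (unfold y1, y2; nra);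
  assert (Hd' : u <= (x2-x1)^2 + (y2-y1)^2) by
    (unfold x1, x2, y1, y2; replace (INR i2 * u - INR i1 * u) with ((INR i2 - INR i1) * u) by ring;
     replace (INR j2 * u - INR j1 * u) with ((INR j2 - INR j1) * u) by ring; exact Hd);
  assert (HE : 2*u < (x2-x1)+(y2-y1)) by nra;
  assert (Hr : sqrt u * sqrt u = u) by (apply sqrt_sqrt; lra);
  assert (Hr0 : 0 <= sqrt u) by apply sqrt_pos;
  assert (Hfin : F (x1+u) y1 x2 (y2+u) - F x1 (y1+u) (x2+u) y2 <= 4 * sqrt u) by
    (rewrite F_diff by lra; apply F_final; unfold x2, y2 in *; lra).
  - intros a b a' b' Ha Hb Ht Ha' Hb' Ht'.
    destruct (trav_F s i1 j1 i2 j2 a b HE Hb Ht) as (px & py & qx & qy & Hin & Hf).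
    destruct (trav_F s i1 j1 i2 j2 a' b' HE Hb' Ht') as (px' & py' & qx' & qy' & Hin' & Hf').
    unfold distinf. replace (snd b) with (- fst b) by lra. replace (snd b') with (- fst b') by lra.
    apply (final_ineq u (sqrt u) (F x1 (y1+u) (x2+u) y2) (F (x1+u) y1 x2 (y2+u))); auto.
    + rewrite Hf; split; [apply F_lo|apply F_hi]; auto.
    + rewrite Hf'; split; [apply F_lo|apply F_hi]; auto.
  - intros a b bc Ha Hb Ht [t Ht0] Hbc.
    destruct (trav_F s i1 j1 i2 j2 a b HE Hb Ht) as (px & py & qx & qy & Hin & Hf).
    unfold distinf. replace (snd b) with (- fst b) by lra. replace (snd bc) with (- fst bc) by lra.
    unfold center in Ht0. change (u_of s) with u in Ht0.
    set (c1x := (INR i1 + /2) * u) in *. set (c1y := (INR j1 + /2) * u) in *.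
    set (c2x := (INR i2 + /2) * u) in *. set (c2y := (INR j2 + /2) * u) in *.
    assert (Hc : fst bc = F c1x c1y c2x c2y).
    { rewrite Ht0 in Hbc |- *; cbn [fst snd] in Hbc |- *.
      transitivity (F ((c2x-c1x)*(-t)+(c1x + t * (c2x - c1x))) ((c2y-c1y)*(-t)+(c1y + t * (c2y - c1y)))
                      ((c2x-c1x)*(1-t)+(c1x + t * (c2x - c1x))) ((c2y-c1y)*(1-t)+(c1y + t * (c2y - c1y)))).
      - symmetry; apply F_line; auto.
        unfold c1x, c1y, c2x, c2y, x1, x2, y1, y2 in *. nra.
      - f_equal; ring. }
    assert (Hcin : inr u x1 y1 x2 y2 c1x c1y c2x c2y) by
      (unfold inr, c1x, c1y, c2x, c2y, x1, x2, y1, y2; nra).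
    apply (final_ineq u (sqrt u) (F x1 (y1+u) (x2+u) y2) (F (x1+u) y1 x2 (y2+u))); auto.
    + rewrite Hc; split; [apply F_lo|apply F_hi]; auto.
    + rewrite Hf; split; [apply F_lo|apply F_hi]; auto.
Qed.
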